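(* If $n\ge 0$ is an integer such that $B_{n+1}(t)-B_n(t)$ is a constant polynomial, then $n=2^{m}-2$ for some integer $m\ge 1$, and in that case $B_{n+1}(t)-B_n(t)=1$.
   Context: The Stern polynomials $B_n(t)\in\mathbb{Z}[t]$, $n\ge 0$, are defined by $B_0(t)=0$, $B_1(t)=1$, $B_{2n}(t)=tB_n(t)$ and $B_{2n+1}(t)=B_n(t)+B_{n+1}(t)$ for $n\ge 1$. *)

(* Defs.v *)
From mathcomp Require Import all_boot all_order all_algebra.
Set Implicit Arguments. Unset Strict Implicit. Unset Printing Implicit Defensive.
Import GRing.Theory.
Local Open Scope ring_scope.

(* Fuel-based recursion: stern_fuel k n = B_n whenever n <= k. *)
Fixpoint stern_fuel (k : nat) (n : nat) : {poly int} :=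
  match k with
  | 0%N => 0
  | k'.+1 =>
    if n == 0%N then 0
    else if n == 1%N then 1
    else if ~~ odd n then 'X * stern_fuel k' n./2
    else stern_fuel k' n./2 + stern_fuel k' (n./2).+1
  end.

Definition stern (n : nat) : {poly int} := stern_fuel n n.

Lemma stern0 : stern 0 = 0. Proof. by []. Qed.
Lemma stern1 : stern 1 = 1. Proof. by []. Qed.

Example stern_test :
  [/\ stern 2 = 'X * 1, stern 3 = 1 + 'X * 1, stern 5 = 'X * 1 + (1 + 'X * 1)
    & stern 6 = 'X * (1 + 'X * 1)].
Proof. split; reflexivity. Qed.

(* Main.v *)
Require Import Defs.
From mathcomp Require Import all_boot all_order all_algebra.
From mathcomp Require Import zify ring lra.
Import GRing.Theory Num.Theory.
Local Open Scope ring_scope.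

Lemma fuel_ind (P : nat -> {poly int} -> Prop) :
  P 0%N 0 -> P 1%N 1 ->
  (forall i p, (1 <= i)%N -> P i p -> P (2*i)%N ('X * p)) ->
  (forall i p q, (1 <= i)%N -> P i p -> P i.+1 q -> P (2*i).+1%N (p+q)) ->
  forall k n, (n <= k)%N -> P n (stern_fuel k n).
Proof.
move=> H0 H1 He Ho; elim=> [|k IH] n.
  by rewrite leqn0 => /eqP ->.
move=> Hn /=.
case: eqP => [->//|n0]; case: eqP => [->//|n1].
have := odd_double_half n; rewrite -muln2.
case: (odd n) => /= Hd.
- have Hh : (1 <= n./2)%N by lia.
  rewrite -{1}Hd add1n mulnC; apply: Ho => //; apply: IH; lia.
- rewrite -{1}Hd add0n mulnC; apply: He; first lia; apply: IH; lia.
Qed.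

Lemma stern_ind (P : nat -> {poly int} -> Prop) :
  P 0%N 0 -> P 1%N 1 ->
  (forall i p, (1 <= i)%N -> P i p -> P (2*i)%N ('X * p)) ->
  (forall i p q, (1 <= i)%N -> P i p -> P i.+1 q -> P (2*i).+1%N (p+q)) ->
  forall n, P n (stern n).
Proof. by move=> ? ? ? ? n; apply: fuel_ind. Qed.

Lemma fuel_stab k : forall k' n, (n <= k)%N -> (n <= k')%N ->
  stern_fuel k n = stern_fuel k' n.
Proof.
elim: k => [|k IH] k' n.
  by rewrite leqn0 => /eqP -> _; case: k'.
case: k' => [|k'] Hk Hk'.
  by move: Hk'; rewrite leqn0 => /eqP ->.
rewrite /=; case: eqP => // n0; case: eqP => // n1.
have := odd_double_half n; rewrite -muln2.
case: (odd n) => /= Hd.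
- by rewrite (IH k') ?(IH k' (n./2).+1) //; lia.
- by rewrite (IH k') //; lia.
Qed.

Lemma fuel_S k n : stern_fuel k.+1 n = if n == 0%N then 0 else if n == 1%N then 1
  else if ~~ odd n then 'X * stern_fuel k n./2
  else stern_fuel k n./2 + stern_fuel k (n./2).+1.
Proof. by []. Qed.

Lemma stern_even h : (1 <= h)%N -> stern (2*h) = 'X * stern h.
Proof.
move=> Hh; rewrite /stern.
have E : (2*h = (2*h).-1.+1)%N by lia.
rewrite {1}E fuel_S.
case: eqP => [|_]; first lia.
case: eqP => [|_]; first lia.
have -> : odd (2*h) = false by rewrite oddM.
have -> : (2*h)./2 = h by rewrite mulnC muln2 doubleK.
rewrite /= (fuel_stab (2*h).-1 h h) //; lia.
Qed.

Lemma stern_odd h : (1 <= h)%N -> stern (2*h).+1 = stern h + stern h.+1.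
Proof.
move=> Hh; rewrite /stern fuel_S.
case: eqP => [|_]; first lia.
case: eqP => [|_]; first lia.
have -> : odd (2*h).+1 = true by rewrite oddS oddM.
have -> : ((2*h).+1)./2 = h by rewrite mulnC muln2; exact: uphalf_double.
rewrite /= (fuel_stab (2*h) h h) ?(fuel_stab (2*h) h.+1 h.+1) //; lia.
Qed.

Lemma stern2 n : (stern n).[2] = n%:R.
Proof.
apply: (stern_ind (fun n p => p.[2] = n%:R)) => //=.
- by rewrite hornerC.
- by rewrite hornerC.
- move=> i p _ Hp; by rewrite hornerE hornerX Hp natrM.
- move=> i p q _ Hp Hq; rewrite hornerE Hp Hq -natrD; congr (_%:R); lia.
Qed.

Lemma stern0' n : (stern n).[0] = (odd n)%:R.
Proof.
apply: (stern_ind (fun n p => p.[0] = (odd n)%:R)) => //=.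
- by rewrite hornerC.
- by rewrite hornerC.
- move=> i p _ Hp; by rewrite hornerE hornerX oddM /= mul0r.
- move=> i p q _ Hp Hq; rewrite hornerE Hp Hq /= oddM /=.
  by case: (odd i).
Qed.

Lemma stern1' n : ((1 <= n)%N -> 1 <= (stern n).[1]) /\
  ((stern n).[1] = 1 -> (1 <= n)%N -> exists j, n = (2 ^ j)%N).
Proof.
apply: (stern_ind (fun n p => ((1 <= n)%N -> 1 <= p.[1]) /\
  (p.[1] = 1 -> (1 <= n)%N -> exists j, n = (2 ^ j)%N))) => //=.
- by rewrite hornerE; split => // _ _; exists 0%N.
- move=> i p Hi [A B]; rewrite hornerE hornerX mul1r; split => [_|E _]; first exact: A.
  have [//|j ->] := B E.
  by exists j.+1; rewrite expnS.
- move=> i p q Hi [A B] [C D]; rewrite hornerE.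
  have a := A Hi; have c := C isT.
  split => [_|]; first lra.
  move=> E; exfalso; lra.
Qed.

Theorem theorem5p2 (n : nat) :
  (exists c : int, stern n.+1 - stern n = c%:P) ->
  (exists m : nat, (1 <= m)%N /\ n = (2 ^ m - 2)%N) /\ stern n.+1 - stern n = 1.
Proof.
move=> [c Hc].
have H2 := congr1 (fun p => p.[2]) Hc; rewrite /= hornerD hornerN hornerC !stern2 in H2.
have H0 := congr1 (fun p => p.[0]) Hc; rewrite /= hornerD hornerN hornerC !stern0' /= in H0.
have H1 := congr1 (fun p => p.[1]) Hc; rewrite /= hornerD hornerN hornerC in H1.
have c1 : c = 1 by rewrite -H2 -natrB //; rewrite subSn // subnn.
rewrite c1 in H0 H1 Hc.
case On : (odd n) H0 => /= H0; first lia.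
split; last by rewrite Hc.
have := odd_double_half n; rewrite On add0n -muln2 mulnC => Hd.
case: (posnP n./2) => h0.
  by exists 1%N; rewrite -Hd h0.
move: H1; rewrite -Hd stern_odd // stern_even // hornerD hornerM hornerX mul1r.
move=> H1; have [_ B] := stern1' (n./2).+1.
have [||j Hj] := B; [lra|by []|].
exists j.+1; split => //; rewrite expnS -Hj; lia.
Qed.
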